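(* Let $\tilde A\in\mathbb{R}^{m\times s}$ have full column rank, $W=\tilde A^\top\tilde A$, $\tilde\lambda>0$, and $r\in\mathbb{R}^s$. Let $u^*=W^{-1}r$, $v^*=(W+\tilde\lambda I)^{-1}r$ and $z^*=\frac1{\tilde\lambda}(u^*-v^* )$ (so that $z^*=(W^2+\tilde\lambda W)^{-1}r$). Suppose $\hat u,\hat v\in\mathbb{R}^s$ satisfy $\|\hat u-u^*\|_W\le\epsilon_{2,1}\|u^*\|_W$ and $\|\hat v-v^*\|_{W+\tilde\lambda I}\le\epsilon_{2,2}\|v^*\|_{W+\tilde\lambda I}$, and let $\hat z=\frac1{\tilde\lambda}(\hat u-\hat v)$. Then $$\|\hat z-z^*\|_{W^2+\tilde\lambda W}\le\frac{1}{\tilde\lambda}\Big(\epsilon_{2,1}\|\tilde A\tilde A^\top+\tilde\lambda I\|+\epsilon_{2,2}\|\tilde A\tilde A^\top\|\Big)\|z^*\|_{W^2+\tilde\lambda W}.$$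
   Context: For positive (semi)definite $B$, $\|x\|_B=\sqrt{x^\top Bx}$; $\|\cdot\|$ on matrices is the spectral norm. *)

(* Defs.v *)
From HB Require Import structures.
From mathcomp Require Import all_boot all_order all_algebra.
From mathcomp Require Import boolp classical_sets reals.
Set Implicit Arguments. Unset Strict Implicit. Unset Printing Implicit Defensive.
Import Order.TTheory GRing.Theory Num.Theory.
Local Open Scope ring_scope.
Local Open Scope classical_set_scope.

Definition vnorm (R : realType) (n : nat) (x : 'cV[R]_n) : R :=
  Num.sqrt (\sum_i (x i 0) ^+ 2).

Definition bnorm (R : realType) (n : nat) (B : 'M[R]_n) (x : 'cV[R]_n) : R :=
  Num.sqrt ((x^T *m B *m x) 0 0).

Definition specnorm (R : realType) (m n : nat) (A : 'M[R]_(m, n)) : R :=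
  sup [set vnorm (A *m x) | x in [set x : 'cV[R]_n | vnorm x = 1]].

(* Main.v *)
Require Import Defs.
From HB Require Import structures.
From mathcomp Require Import all_boot all_order all_algebra.
From mathcomp Require Import boolp classical_sets reals.
From mathcomp Require Import ring lra.
Import Order.TTheory GRing.Theory Num.Theory.
Local Open Scope ring_scope.
Set Implicit Arguments. Unset Strict Implicit. Unset Printing Implicit Defensive.

Section S.
Variable R : realType.

Definition dot n (x y : 'cV[R]_n) : R := (x^T *m y) 0 0.

Lemma dotE n (x y : 'cV[R]_n) : dot x y = \sum_i x i 0 * y i 0.
Proof. by rewrite /dot mxE; apply: eq_bigr => i _; rewrite mxE. Qed.

Lemma dotC n (x y : 'cV[R]_n) : dot x y = dot y x.
Proof. by rewrite !dotE; apply: eq_bigr => i _; rewrite mulrC. Qed.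

Lemma dotDr n (x y z : 'cV[R]_n) : dot x (y + z) = dot x y + dot x z.
Proof. by rewrite /dot mulmxDr mxE. Qed.

Lemma dotBr n (x y z : 'cV[R]_n) : dot x (y - z) = dot x y - dot x z.
Proof. by rewrite /dot mulmxBr !mxE. Qed.

Lemma dotZr n k (x y : 'cV[R]_n) : dot x (k *: y) = k * dot x y.
Proof. by rewrite /dot -scalemxAr !mxE. Qed.

Lemma dotDl n (x y z : 'cV[R]_n) : dot (y + z) x = dot y x + dot z x.
Proof. by rewrite ![dot _ x]dotC dotDr. Qed.

Lemma dotBl n (x y z : 'cV[R]_n) : dot (y - z) x = dot y x - dot z x.
Proof. by rewrite ![dot _ x]dotC dotBr. Qed.

Lemma dotZl n k (x y : 'cV[R]_n) : dot (k *: y) x = k * dot y x.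
Proof. by rewrite ![dot _ x]dotC dotZr. Qed.

Lemma dot0r n (x : 'cV[R]_n) : dot x 0 = 0.
Proof. by rewrite /dot mulmx0 mxE. Qed.

Lemma dotM m n (x : 'cV[R]_m) (B : 'M[R]_(m, n)) (y : 'cV[R]_n) :
  dot x (B *m y) = dot (B^T *m x) y.
Proof. by rewrite /dot trmx_mul trmxK mulmxA. Qed.

Lemma dot_ge0 n (x : 'cV[R]_n) : 0 <= dot x x.
Proof. by rewrite dotE; apply: sumr_ge0 => i _; rewrite -expr2 sqr_ge0. Qed.

Lemma dot_eq0 n (x : 'cV[R]_n) : dot x x = 0 -> x = 0.
Proof.
rewrite dotE => H.
have H2 := psumr_eq0P (fun i _ => (ltac:(by rewrite -expr2 sqr_ge0) : 0 <= x i 0 * x i 0)) H.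
apply/matrixP => i j; rewrite (ord1 j) mxE.
by have /eqP := H2 i isT; rewrite mulf_eq0 orbb => /eqP.
Qed.

Lemma vnormE n (x : 'cV[R]_n) : vnorm x = Num.sqrt (dot x x).
Proof. by rewrite /vnorm dotE; congr Num.sqrt; apply: eq_bigr => i _; rewrite expr2. Qed.

Lemma bnormE n (B : 'M[R]_n) (x : 'cV[R]_n) : bnorm B x = Num.sqrt (dot x (B *m x)).
Proof. by rewrite /bnorm /dot mulmxA. Qed.


Lemma quad_disc (a b c : R) : 0 <= a -> 0 <= c ->
  (forall t, 0 <= a + 2 * t * b + t ^+ 2 * c) -> b ^+ 2 <= a * c.
Proof.
move=> a0 c0 H.
have [cz|cp] := eqVneq c 0.
  rewrite cz mulr0.
  have [bz|bn] := eqVneq b 0; first by rewrite bz expr0n.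
  have := H (- (a + 1) / (2 * b)).
  have -> : 2 * (- (a + 1) / (2 * b)) * b = - (a + 1).
    by field.
  rewrite cz mulr0 addr0 => h; lra.
have tc : (- b / c) * c = - b by field.
have := H (- b / c).
set t := - b / c => h.
have h2 : 0 <= a + t * b.
  have e : t ^+ 2 * c = - t * b by rewrite expr2 -mulrA tc mulrN mulNr.
  lra.
have : 0 <= c * (a + t * b) by apply: mulr_ge0; [done|].
have -> : c * (a + t * b) = a * c - b ^+ 2.
  by rewrite mulrDr [c * (t * b)]mulrA [c * t]mulrC tc; ring.
lra.
Qed.


Lemma symdot n (B : 'M[R]_n) u v : B^T = B -> dot v (B *m u) = dot u (B *m v).
Proof. by move=> hB; rewrite dotM hB dotC. Qed.

Lemma expand_q n (B : 'M[R]_n) u v t : B^T = B ->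
  dot (u + t *: v) (B *m (u + t *: v)) =
  dot u (B *m u) + 2 * t * dot u (B *m v) + t ^+ 2 * dot v (B *m v).
Proof.
move=> hB; rewrite mulmxDr -scalemxAr !dotDl !dotDr !dotZl !dotZr (symdot _ _ hB).
ring.
Qed.

Lemma CS n (B : 'M[R]_n) u v : B^T = B -> (forall y, 0 <= dot y (B *m y)) ->
  dot u (B *m v) ^+ 2 <= dot u (B *m u) * dot v (B *m v).
Proof.
move=> hB hp; apply: quad_disc => // t.
by rewrite -expand_q.
Qed.

Lemma CSabs n (B : 'M[R]_n) u v : B^T = B -> (forall y, 0 <= dot y (B *m y)) ->
  `| dot u (B *m v) | <= Num.sqrt (dot u (B *m u)) * Num.sqrt (dot v (B *m v)).
Proof.
move=> hB hp; rewrite -sqrtrM // -sqrtr_sqr ler_sqrt; last by apply: mulr_ge0.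
exact: CS.
Qed.

Lemma mx1_sym n : (1%:M : 'M[R]_n)^T = 1%:M. Proof. exact: trmx1. Qed.
Lemma mx1_psd n (y : 'cV[R]_n) : 0 <= dot y (1%:M *m y).
Proof. by rewrite mul1mx dot_ge0. Qed.

Lemma CS1 n (u v : 'cV[R]_n) : `| dot u v | <= vnorm u * vnorm v.
Proof.
have := CSabs u v (@mx1_sym n) (@mx1_psd n).
by rewrite !mul1mx !vnormE.
Qed.

Lemma vnorm0 n : vnorm (0 : 'cV[R]_n) = 0.
Proof. by rewrite /vnorm big1 ?sqrtr0 // => i _; rewrite mxE expr0n. Qed.

Lemma vnorm_ge0 n (x : 'cV[R]_n) : 0 <= vnorm x.
Proof. by rewrite vnormE sqrtr_ge0. Qed.

Lemma vnormZ n k (x : 'cV[R]_n) : vnorm (k *: x) = `|k| * vnorm x.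
Proof.
by rewrite !vnormE dotZl dotZr mulrA -expr2 sqrtrM ?sqr_ge0 // sqrtr_sqr.
Qed.

Lemma vnorm_sq n (x : 'cV[R]_n) : vnorm x ^+ 2 = dot x x.
Proof. by rewrite vnormE sqr_sqrtr // dot_ge0. Qed.

Lemma vnorm_gt0 n (x : 'cV[R]_n) : x != 0 -> 0 < vnorm x.
Proof.
move=> xn; rewrite vnormE sqrtr_gt0 lt_def dot_ge0 andbT.
by apply/eqP => /dot_eq0 h; rewrite h eqxx in xn.
Qed.

Lemma vnorm_unit n (x : 'cV[R]_n) : x != 0 -> vnorm ((vnorm x)^-1 *: x) = 1.
Proof.
move=> xn; have h := vnorm_gt0 xn.
rewrite vnormZ ger0_norm; last by rewrite invr_ge0 ltW.
rewrite mulVf //.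
by rewrite gt_eqF.
Qed.


Lemma sq_le_of_abs (d v : R) : `|d| <= v -> d ^+ 2 <= v ^+ 2.
Proof.
move=> h; rewrite -(real_normK (num_real d)).
by apply: lerXn2r => //; rewrite nnegrE; [apply: normr_ge0 | apply: le_trans h].
Qed.

Lemma entry_dot m n (B : 'M[R]_(m, n)) (x : 'cV[R]_n) i :
  (B *m x) i 0 = dot (row i B)^T x.
Proof. by rewrite /dot trmxK -row_mul [RHS]mxE. Qed.

Local Open Scope classical_set_scope.
Definition specset m n (B : 'M[R]_(m, n)) :=
  [set vnorm (B *m x) | x in [set x : 'cV[R]_n | vnorm x = 1]].

Local Close Scope classical_set_scope.
Lemma spec_bounded m n (B : 'M[R]_(m, n)) : has_ubound (specset B).
Proof.
exists (Num.sqrt (\sum_i dot (row i B)^T (row i B)^T)).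
move=> _ [x /= hx <-].
rewrite vnormE ler_sqrt; last by apply: sumr_ge0 => i _; apply: dot_ge0.
rewrite dotE; apply: ler_sum => i _.
rewrite -expr2 entry_dot -vnorm_sq; apply: sq_le_of_abs.
by have := CS1 (row i B)^T x; rewrite hx mulr1.
Qed.

Lemma spec_le m n (B : 'M[R]_(m, n)) (y : 'cV[R]_n) :
  vnorm (B *m y) <= specnorm B * vnorm y.
Proof.
have [->|yn] := eqVneq y 0.
  by rewrite mulmx0 !vnorm0 mulr0.
have hp := vnorm_gt0 yn.
have hs : vnorm (B *m ((vnorm y)^-1 *: y)) <= specnorm B.
  have hub := ub_le_sup (spec_bounded B); rewrite /specnorm; apply: hub.
  by exists ((vnorm y)^-1 *: y) => //=; apply: vnorm_unit.
move: hs; rewrite -scalemxAr vnormZ ger0_norm; last by rewrite invr_ge0 ltW.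
by rewrite ler_pdivrMl // mulrC.
Qed.

Lemma spec_ge0 m n (B : 'M[R]_(m, n)) : (0 < n)%N -> 0 <= specnorm B.
Proof.
move=> n0.
pose y : 'cV[R]_n := const_mx 1.
have yn : y != 0.
  apply/negP => /eqP /matrixP /(_ (Ordinal n0) 0); rewrite !mxE => /eqP.
  by rewrite oner_eq0.
apply: le_trans (vnorm_ge0 (B *m ((vnorm y)^-1 *: y))) _.
apply: (ub_le_sup (spec_bounded B)).
by exists ((vnorm y)^-1 *: y) => //=; apply: vnorm_unit.
Qed.


Lemma quad_le n (B : 'M[R]_n) (y : 'cV[R]_n) :
  dot y (B *m y) <= specnorm B * dot y y.
Proof.
apply: le_trans (ler_norm _) _.
apply: le_trans (CS1 _ _) _.
rewrite -vnorm_sq expr2 mulrA [specnorm B * _]mulrC -mulrA ler_wpM2l ?vnorm_ge0 //.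
exact: spec_le.
Qed.

Lemma sq_le n (B : 'M[R]_n) (y : 'cV[R]_n) : (0 < n)%N -> B^T = B ->
  (forall y, 0 <= dot y (B *m y)) ->
  dot (B *m y) (B *m y) <= specnorm B * dot y (B *m y).
Proof.
move=> n0 hB hp.
have c0 := spec_ge0 B n0.
set p := dot (B *m y) (B *m y).
set q := dot y (B *m y).
have q0 : 0 <= q := hp y.
have p0 : 0 <= p := dot_ge0 _.
have pe : p = dot y (B *m (B *m y)) by rewrite /p [RHS]dotM hB.
have h1 := CS y (B *m y) hB hp.
rewrite -pe in h1.
have h2 := quad_le B (B *m y).
have h3 : p ^+ 2 <= q * (specnorm B * p).
  apply: le_trans h1 _; rewrite -/q ler_wpM2l //.
have [pz|pp] := eqVneq p 0; first by rewrite pz; apply: mulr_ge0.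
have pgt : 0 < p by rewrite lt_def pp p0.
nra.
Qed.


Lemma sqrt_le_of (X S : R) : 0 <= S -> X <= S ^+ 2 -> Num.sqrt X <= S.
Proof.
move=> S0 h; apply: le_trans (_ : Num.sqrt (S ^+ 2) <= S).
  by rewrite ler_sqrt // sqr_ge0.
by rewrite sqrtr_sqr ger0_norm.
Qed.

Lemma bnorm_ge0 n (M : 'M[R]_n) x : 0 <= bnorm M x.
Proof. by rewrite /bnorm sqrtr_ge0. Qed.

Lemma bnormZ n (M : 'M[R]_n) k x : bnorm M (k *: x) = `|k| * bnorm M x.
Proof.
rewrite !bnormE -scalemxAr dotZl dotZr mulrA -expr2 sqrtrM ?sqr_ge0 //.
by rewrite sqrtr_sqr.
Qed.

Lemma bnorm_tri n (M : 'M[R]_n) u v : M^T = M -> (forall y, 0 <= dot y (M *m y)) ->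
  bnorm M (u - v) <= bnorm M u + bnorm M v.
Proof.
move=> hM hp; rewrite !bnormE.
have e : u - v = u + (-1) *: v by rewrite scaleN1r.
rewrite e expand_q //.
apply: sqrt_le_of; first by apply: addr_ge0; apply: sqrtr_ge0.
have h := CSabs u v hM hp.
have ha := sqr_sqrtr (hp u).
have hc := sqr_sqrtr (hp v).
have hb := ler_norm (- dot u (M *m v)); rewrite normrN in hb.
set a := dot u (M *m u) in ha h *; set c := dot v (M *m v) in hc h *.
set b := dot u (M *m v) in h hb *.
rewrite sqrrD ha hc; nra.
Qed.

Lemma inj_unit n (B : 'M[R]_n) :
  (forall x : 'cV[R]_n, B *m x = 0 -> x = 0) -> B \in unitmx.
Proof.
move=> hi; rewrite -unitmx_tr -row_free_unit -kermx_eq0.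
apply/eqP/row_matrixP => i; rewrite row0.
have h : row i (kermx B^T) *m B^T = 0 by rewrite -row_mul mulmx_ker row0.
have h2 : B *m (row i (kermx B^T))^T = 0.
  by have := congr1 trmx h; rewrite trmx_mul trmxK trmx0.
by have := hi _ h2 => /(congr1 trmx); rewrite trmxK trmx0.
Qed.


Section Mat.
Variables (m s : nat) (A : 'M[R]_(m, s)) (lam : R).

Lemma K1 x : dot x ((A^T *m A) *m x) = dot (A *m x) (A *m x).
Proof. by rewrite -mulmxA dotM trmxK. Qed.

Lemma Kplus x : dot x ((A^T *m A + lam%:M) *m x) = dot (A *m x) (A *m x) + lam * dot x x.
Proof. by rewrite mulmxDl mul_scalar_mx dotDr dotZr K1. Qed.

Lemma KB2 y : dot y ((A *m A^T) *m y) = dot (A^T *m y) (A^T *m y).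
Proof. by rewrite -mulmxA dotM. Qed.

Lemma KB1 y : dot y ((A *m A^T + lam%:M) *m y) = dot (A^T *m y) (A^T *m y) + lam * dot y y.
Proof. by rewrite mulmxDl mul_scalar_mx dotDr dotZr KB2. Qed.

Lemma K2 : (A^T *m A) *m (A^T *m A) + lam *: (A^T *m A) =
  A^T *m (A *m A^T + lam%:M) *m A.
Proof.
rewrite mulmxDr mulmxDl mul_mx_scalar -scalemxAl.
by rewrite !mulmxA.
Qed.

Lemma KM x : dot x (((A^T *m A) *m (A^T *m A) + lam *: (A^T *m A)) *m x)
  = dot (A *m x) ((A *m A^T + lam%:M) *m (A *m x)).
Proof. by rewrite K2 -!mulmxA dotM trmxK. Qed.

Lemma K4 : A *m (A^T *m A + lam%:M) = (A *m A^T + lam%:M) *m A.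
Proof.
by rewrite mulmxDr mulmxDl mul_mx_scalar mul_scalar_mx !mulmxA.
Qed.

Lemma B1_sym : (A *m A^T + lam%:M)^T = A *m A^T + lam%:M.
Proof. by rewrite linearD /= trmx_mul trmxK tr_scalar_mx. Qed.

Lemma B2_sym : (A *m A^T)^T = A *m A^T.
Proof. by rewrite trmx_mul trmxK. Qed.

Lemma B2_psd y : 0 <= dot y ((A *m A^T) *m y).
Proof. by rewrite KB2 dot_ge0. Qed.

Lemma B1_psd : 0 <= lam -> forall y, 0 <= dot y ((A *m A^T + lam%:M) *m y).
Proof.
move=> l0 y; rewrite KB1; apply: addr_ge0; first exact: dot_ge0.
by apply: mulr_ge0 => //; apply: dot_ge0.
Qed.

Lemma A_sq_le (x : 'cV[R]_s) : (0 < m)%N ->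
  dot (A *m x) (A *m x) <= specnorm (A *m A^T) * dot x x.
Proof.
move=> m0; set P := dot (A *m x) (A *m x).
have c0 := spec_ge0 (A *m A^T) m0.
have P0 : 0 <= P := dot_ge0 _.
have x0 : 0 <= dot x x := dot_ge0 _.
have e : P = dot x (1%:M *m (A^T *m (A *m x))) by rewrite mul1mx /P [RHS]dotM trmxK.
have h1 := CS x (A^T *m (A *m x)) (@mx1_sym s) (@mx1_psd s).
rewrite -e !mul1mx in h1.
have h2 : dot (A^T *m (A *m x)) (A^T *m (A *m x)) <= specnorm (A *m A^T) * P.
  by rewrite -KB2; apply: quad_le.
have h3 : P ^+ 2 <= dot x x * (specnorm (A *m A^T) * P).
  by apply: le_trans h1 _; rewrite ler_wpM2l.
have [pz|pp] := eqVneq P 0; first by rewrite pz; apply: mulr_ge0.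
have pgt : 0 < P by rewrite lt_def pp P0.
nra.
Qed.

End Mat.

Lemma final_bound (a bW Y N c e : R) : 0 <= a -> 0 <= bW -> 0 <= Y -> 0 <= N -> 0 <= c ->
  a <= c * bW ^+ 2 -> bW <= e * Y -> Y ^+ 2 <= c * N ^+ 2 -> (Y = 0 -> N = 0) ->
  Num.sqrt a <= e * c * N.
Proof.
move=> a0 b0 Y0 N0 c0 h1 h2 h3 h4.
case: (lerP 0 e) => e0.
  apply: sqrt_le_of; first by apply: mulr_ge0 => //; apply: mulr_ge0.
  have h5 : bW ^+ 2 <= (e * Y) ^+ 2.
    by apply: lerXn2r => //; rewrite nnegrE //; apply: le_trans h2.
  apply: le_trans h1 _.
  apply: le_trans (ler_wpM2l c0 h5) _.
  rewrite !exprMn [c * _]mulrC -!mulrA ler_wpM2l ?sqr_ge0 //.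
  rewrite [c * _]mulrA [c * _]mulrC -mulrA ler_wpM2l ?sqr_ge0 //.
  by rewrite mulrA -expr2 mulrC; exact: (ler_wpM2l c0 h3).
have hY : 0 <= (- e) * Y by apply: mulr_ge0 => //; lra.
rewrite mulNr in hY.
have eY : e * Y = 0 by lra.
have Yz : Y = 0.
  by move/eqP: eY; rewrite mulf_eq0 => /orP [/eqP ez|/eqP //]; rewrite ez in e0; lra.
rewrite (h4 Yz) mulr0.
have bz : bW = 0 by rewrite Yz mulr0 in h2; apply/le_anti; rewrite h2 b0.
rewrite bz expr0n /= mulr0 in h1.
have az : a = 0 by apply/le_anti; rewrite h1 a0.
by rewrite az sqrtr0.
Qed.

End S.

Lemma bnorm_s0 (R : realType) s (M : 'M[R]_s) x : s = 0%N -> bnorm M x = 0.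
Proof.
move=> hs; rewrite bnormE dotE big1 ?sqrtr0 // => [[i hi]] _.
by exfalso; move: (hi); rewrite hs.
Qed.

Lemma bnorm0 (R : realType) s (M : 'M[R]_s) : bnorm M 0 = 0.
Proof. by rewrite bnormE mulmx0 dot0r sqrtr0. Qed.

Unset Implicit Arguments.
Theorem mainTheorem13 (R : realType) (m s : nat) (At : 'M[R]_(m, s))
  (lam eps21 eps22 : R) (r uh vh : 'cV[R]_s) :
  \rank At = s -> 0 < lam ->
  let W := At^T *m At in
  let ustar := invmx W *m r in
  let vstar := invmx (W + lam%:M) *m r in
  let zstar := lam^-1 *: (ustar - vstar) in
  bnorm W (uh - ustar) <= eps21 * bnorm W ustar ->
  bnorm (W + lam%:M) (vh - vstar) <= eps22 * bnorm (W + lam%:M) vstar ->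
  let zh := lam^-1 *: (uh - vh) in
  bnorm (W *m W + lam *: W) (zh - zstar) <=
    lam^-1 * (eps21 * specnorm (At *m At^T + lam%:M)
              + eps22 * specnorm (At *m At^T))
    * bnorm (W *m W + lam *: W) zstar.
Proof.
move=> hrank lam0 W ustar vstar zstar hu hv; rewrite [is_true _]/=.
set zh := lam^-1 *: (uh - vh).
have [s0|sp] := eqVneq s 0%N.
  by rewrite !(bnorm_s0 _ _ s0) mulr0.
have m0 : (0 < m)%N.
  by apply: leq_trans (rank_leq_row At); rewrite hrank lt0n.
set M := W *m W + lam *: W.
set B1 := At *m At^T + lam%:M.
set B2 := At *m At^T.
set c1 := specnorm B1.
set c2 := specnorm B2.
have c1p : 0 <= c1 := spec_ge0 _ m0.
have c2p : 0 <= c2 := spec_ge0 _ m0.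
have l0 : 0 <= lam := ltW lam0.
have injA : forall x : 'cV[R]_s, At *m x = 0 -> x = 0.
  move=> x hx.
  have rf : row_free At^T by rewrite /row_free mxrank_tr hrank.
  have : x^T *m At^T == 0 by rewrite -trmx_mul hx trmx0.
  by rewrite mulmx_free_eq0 // => /eqP /(congr1 trmx); rewrite trmxK trmx0.
have injW : forall x : 'cV[R]_s, W *m x = 0 -> x = 0.
  move=> x hx; apply: injA; apply: dot_eq0.
  by rewrite -K1 -/W hx dot0r.
have injWl : forall x : 'cV[R]_s, (W + lam%:M) *m x = 0 -> x = 0.
  move=> x hx; apply: dot_eq0.
  have := Kplus At lam x; rewrite -/W hx dot0r => h.
  have := dot_ge0 (At *m x); have := dot_ge0 x => h1 h2.
  have h3 : lam * dot x x = 0 by nra.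
  by move/eqP: h3; rewrite mulf_eq0 gt_eqF //= => /eqP.
have uW := inj_unit injW.
have uWl := inj_unit injWl.
have hus : ustar = (W + lam%:M) *m zstar.
  rewrite /zstar -scalemxAr mulmxBr /ustar /vstar !mulmxA mulmxV //.
  rewrite mulmxDl mul_scalar_mx mulmxV // mulmxDl -scalemxAl addrAC subrr add0r.
  by rewrite scalerA mulVf ?gt_eqF // scale1r.
have hvs : vstar = W *m zstar.
  rewrite /zstar -scalemxAr mulmxBr /ustar /vstar !mulmxA (mulmxV uW) -(mulmxV uWl).
  rewrite -!mulmxBl [W + _]addrC addrK mul_scalar_mx -!scalemxAl scalerA.
  by rewrite mulVf ?gt_eqF // scale1r.
have KMx : forall x, dot x (M *m x) = dot (At *m x) (B1 *m (At *m x)) := KM At lam.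
have Msym : M^T = M.
  rewrite /M /W K2; rewrite !trmx_mul trmxK -/B1.
  by rewrite (B1_sym At lam) mulmxA.
have Mpsd : forall y, 0 <= dot y (M *m y).
  by move=> y; rewrite KMx; apply: B1_psd.
set N := bnorm M zstar.
have N0 : 0 <= N := bnorm_ge0 _ _.
set eu := uh - ustar.
set ev := vh - vstar.
have bu : bnorm M eu <= eps21 * c1 * N.
  rewrite [bnorm M eu]bnormE.
  apply: final_bound _ (bnorm_ge0 W eu) (bnorm_ge0 W ustar) N0 c1p _ hu _ _.
  - exact: Mpsd.
  - rewrite KMx bnormE sqr_sqrtr; last by rewrite K1 dot_ge0.
    by rewrite K1; apply: quad_le.
  - rewrite bnormE sqr_sqrtr; last by rewrite K1 dot_ge0.
    rewrite /N bnormE sqr_sqrtr // K1 hus mulmxA K4 -mulmxA KMx.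
    apply: sq_le => //; [exact: B1_sym | exact: B1_psd].
  - rewrite bnormE => /eqP; rewrite sqrtr_eq0 K1 => h.
    have : dot (At *m ustar) (At *m ustar) = 0 by apply/le_anti; rewrite h dot_ge0.
    move/dot_eq0/injA; rewrite hus => /injWl hz0.
    by rewrite /N hz0 bnorm0.
have bv : bnorm M ev <= eps22 * c2 * N.
  rewrite [bnorm M ev]bnormE.
  apply: final_bound _ (bnorm_ge0 _ ev) (bnorm_ge0 _ vstar) N0 c2p _ hv _ _.
  - exact: Mpsd.
  - rewrite KMx bnormE sqr_sqrtr; last by rewrite Kplus; apply: addr_ge0; [apply: dot_ge0|apply: mulr_ge0 => //; apply: dot_ge0].
    rewrite Kplus /B1 KB1 -KB2.
    have h1 := quad_le B2 (At *m ev).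
    have h2 := A_sq_le At ev m0.
    rewrite -/B2 -/c2 in h1 h2 *.
    have := dot_ge0 (At *m ev); have := dot_ge0 ev => g1 g2.
    nra.
  - rewrite bnormE sqr_sqrtr; last by rewrite Kplus; apply: addr_ge0; [apply: dot_ge0|apply: mulr_ge0 => //; apply: dot_ge0].
    rewrite /N bnormE sqr_sqrtr // KMx Kplus hvs /B1 KB1 -KB2 -/B2.
    have e1 : At *m (W *m zstar) = B2 *m (At *m zstar) by rewrite /W /B2 !mulmxA.
    have e2 : dot (W *m zstar) (W *m zstar) = dot (At *m zstar) (B2 *m (At *m zstar)).
      by rewrite /W -mulmxA KB2 -/B2 mulmxA.
    rewrite e1 e2.
    have h1 := sq_le (At *m zstar) m0 (B2_sym At) (@B2_psd _ _ _ At).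
    have h2 := quad_le B2 (At *m zstar).
    rewrite -/B2 -/c2 in h1 h2 *.
    have := B2_psd At (At *m zstar); rewrite -/B2 => g1.
    nra.
  - rewrite bnormE => /eqP; rewrite sqrtr_eq0 Kplus => h.
    have := dot_ge0 (At *m vstar); have := dot_ge0 vstar => g1 g2.
    have h3 : lam * dot vstar vstar = 0 by apply/le_anti; rewrite mulr_ge0 // andbT; lra.
    move/eqP: h3; rewrite mulf_eq0 gt_eqF //= => /eqP /dot_eq0.
    rewrite hvs => /injW hz0.
    by rewrite /N hz0 bnorm0.
have hz : zh - zstar = lam^-1 *: (eu - ev).
  rewrite /zh /zstar /eu /ev -scalerBr; congr (_ *: _).
  rewrite !opprB !addrA -!addrA; congr (uh + _); rewrite addrCA [RHS]addrCA; congr (_ + _); exact: addrC.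
rewrite hz bnormZ ger0_norm ?invr_ge0 //.
rewrite -mulrA ler_wpM2l ?invr_ge0 //.
apply: le_trans (bnorm_tri _ _ Msym Mpsd) _.
rewrite mulrDl; exact: lerD.
Qed.
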